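(* Let $\mathbb{K}$ be a field and let $f\in\mathbb{K}[x]$ be a tame polynomial. Then the fixing group $\Gamma_\mathbb{K}(f)$ is cyclic.
   Context: A polynomial $f\in\mathbb{K}[x]$ is called tame if $\mathrm{char}\,\mathbb{K}$ does not divide $\deg f$ (in particular a tame polynomial is non-constant). For a non-constant rational function $f\in\mathbb{K}(x)$, its fixing group is $\Gamma_\mathbb{K}(f)=\{u=\frac{ax+b}{cx+d}: a,b,c,d\in\mathbb{K},\ ad-bc\neq 0,\ f\circ u=f\}$, where $\circ$ denotes composition $g\circ h=g(h(x))$; it is a group under composition (viewed as a subgroup of the group of Möbius transformations $PSL(2,\mathbb{K})$). *)

(* Defs.v *)
From HB Require Import structures.
From mathcomp Require Import all_boot all_order all_algebra.
From mathcomp Require Import fraction.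
Set Implicit Arguments. Unset Strict Implicit. Unset Printing Implicit Defensive.
Import GRing.Theory.
Local Open Scope ring_scope.

Definition ratf (K : fieldType) := {fraction {poly K}}.

Definition cst (K : fieldType) (c : K) : ratf K := tofrac (c%:P).

Definition xF (K : fieldType) : ratf K := tofrac ('X : {poly K}).

Definition pcomp (K : fieldType) (f : {poly K}) (r : ratf K) : ratf K :=
  (map_poly (@cst K) f).[r].

Definition mob_comp (K : fieldType) (a b c d : K) (r : ratf K) : ratf K :=
  (cst a * r + cst b) / (cst c * r + cst d).

Definition mob (K : fieldType) (a b c d : K) : ratf K := mob_comp a b c d (xF K).

Definition tame (K : fieldType) (f : {poly K}) : Prop :=
  (0 < (size f).-1)%N /\ forall p : nat, p \in [pchar K] -> ~~ (p %| (size f).-1)%N.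

Definition in_fixing_group (K : fieldType) (f : {poly K}) (u : ratf K) : Prop :=
  exists a b c d : K, a * d - b * c != 0 /\ u = mob a b c d /\ pcomp f u = tofrac f.

(* Main.v *)
From HB Require Import structures.
From mathcomp Require Import all_boot all_order all_algebra fraction.
From mathcomp Require Import ring.
Require Import Defs.
From mathcomp Require Import cyclic.
From Stdlib Require Import Classical.
Set Implicit Arguments. Unset Strict Implicit. Unset Printing Implicit Defensive.
Import GRing.Theory.
Local Open Scope ring_scope.

Section Lin.
Variable K : fieldType.
Implicit Types (p : {poly K}) (a c : K).

Definition lin a c : {poly K} := a *: 'X + c%:P.

Lemma coef_lin a c i : (lin a c)`_i = if i == 0%N then c else if i == 1%N then a else 0.
Proof. by rewrite /lin coefD coefZ coefX coefC; case: i => [|[|i]] /=; rewrite ?mulr0 ?mulr1 ?add0r ?addr0. Qed.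

Lemma size_lin a c : a != 0 -> size (lin a c) = 2%N.
Proof.
move=> a0; apply/eqP; rewrite eqn_leq; apply/andP; split.
  rewrite /lin (leq_trans (size_polyD _ _)) // geq_max; apply/andP; split.
    by rewrite (leq_trans (size_scale_leq _ _)) // size_polyX.
  by rewrite size_polyC (leq_trans (leq_b1 _)).
have : (lin a c)`_1 != 0 by rewrite coef_lin.
apply: contraR; rewrite -ltnNge ltnS => h; apply/eqP/nth_default.
exact: h.
Qed.

Lemma lead_lin a c : a != 0 -> lead_coef (lin a c) = a.
Proof. by move=> a0; rewrite lead_coefE size_lin // coef_lin. Qed.

Lemma linM p a c : p * lin a c = a *: (p * 'X) + p * c%:P.
Proof. by rewrite /lin mulrDr scalerAr. Qed.

Lemma size_lin_exp a c m : a != 0 -> size (lin a c ^+ m) = m.+1.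
Proof.
move=> a0; have := size_exp (lin a c) m; rewrite size_lin // mul1n => h; rewrite -[in RHS]h.
by rewrite prednK // lt0n size_poly_eq0 expf_neq0 // -size_poly_eq0 size_lin.
Qed.

Lemma coef_lin_exp a c k : a != 0 ->
  ((lin a c) ^+ k)`_k = a ^+ k /\ ((lin a c) ^+ k.+1)`_k = k.+1%:R * a ^+ k * c.
Proof.
move=> a0; elim: k => [|k [IH1 IH2]].
  by rewrite expr0 expr1 coef1 coef_lin /=; split=> //; ring.
have szk m : size (lin a c ^+ m) = m.+1 by exact: size_lin_exp.
have A : (lin a c ^+ k.+1)`_k.+1 = a ^+ k.+1.
  rewrite exprS mulrC linM coefD coefZ coefMX coefMC /= IH1 exprS.
  by rewrite nth_default ?szk // mul0r addr0.
split=> //.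
rewrite [lin a c ^+ _]exprS mulrC linM coefD coefZ coefMX coefMC /= IH2 A.
rewrite !exprS -[k.+2]addn1 natrD; ring.
Qed.

Lemma coef_comp_lin p a c n : a != 0 -> size p = n.+2 ->
  (p \Po lin a c)`_n = p`_n * a ^+ n + p`_n.+1 * (n.+1%:R * a ^+ n * c).
Proof.
move=> a0 sp; rewrite coef_comp_poly sp big_ord_recr big_ord_recr /=.
rewrite big1 ?add0r; first by rewrite (coef_lin_exp c n a0).1 (coef_lin_exp c n a0).2.
move=> i _; rewrite (@nth_default _ 0 (lin a c ^+ i)) ?mulr0 //.
by rewrite size_lin_exp.
Qed.
End Lin.
Section Fix.
Variable K : fieldType.
Variable f : {poly K}.
Variable n : nat.
Hypothesis sf : size f = n.+2.
Hypothesis hN : n.+1%:R != 0 :> K.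

Definition sh : K := - f`_n / (n.+1%:R * f`_n.+1).

Lemma lcf0 : f`_n.+1 != 0.
Proof.
have : lead_coef f != 0 by rewrite lead_coef_eq0 -size_poly_eq0 sf.
by rewrite lead_coefE sf.
Qed.

Lemma fixlin a b : f \Po lin a b = f -> a ^+ n.+1 = 1 /\ b = (1 - a) * sh.
Proof.
move=> E.
have a0 : a != 0.
  apply/eqP => a0; move: E; rewrite a0 /lin scale0r add0r comp_polyCr => E.
  by have := size_polyC (f.[b]); rewrite E sf; case: (_ != 0).
have an : a ^+ n.+1 = 1.
  have := lead_coef_comp f (q:=lin a b); rewrite size_lin // E lead_lin // sf /=.
  rewrite lead_coefE sf => /(_ isT) /esym /eqP.
  move=> h; have l0 := lcf0; apply: (mulfI l0); rewrite mulr1; exact/eqP.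
split=> //.
have := @coef_comp_lin K f a b n a0 sf; rewrite E => h.
have h2 : f`_n * a = f`_n * a ^+ n.+1 + f`_n.+1 * (n.+1%:R * a ^+ n.+1 * b).
  rewrite !exprS; move: h; set u := a ^+ n => h.
  have -> : f`_n * (a * u) + f`_n.+1 * (n.+1%:R * (a * u) * b) = a * (f`_n * u + f`_n.+1 * (n.+1%:R * u * b)) by ring.
  by rewrite -h; ring.
move: h2; rewrite an => h2.
have l0 := lcf0.
have nz := mulf_neq0 hN l0.
have e : b * (n.+1%:R * f`_n.+1) = (1 - a) * - f`_n.
  have -> : b * (n.+1%:R * f`_n.+1) = f`_n.+1 * (n.+1%:R * b) by ring.
  have -> : f`_n.+1 * (n.+1%:R * b) = f`_n * a - f`_n by rewrite h2; ring.
  ring.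
rewrite /sh; apply: (mulIf nz); rewrite e; field.
by rewrite l0 addrC natr1.
Qed.
End Fix.
Section Frac.
Variable K : fieldType.
Implicit Types (f p q : {poly K}).

Lemma cst_tofrac : @cst K =1 (fun c => tofrac c%:P).
Proof. by []. Qed.

Lemma pcomp_tofrac f p : pcomp f (tofrac p) = tofrac (f \Po p).
Proof.
rewrite /pcomp /comp_poly.
have -> : map_poly (@cst K) f = map_poly (@tofrac _) (map_poly polyC f).
  by rewrite -map_poly_comp.
by rewrite horner_map.
Qed.

Lemma mob_comp_lin z b p : mob_comp z b 0 1 (tofrac p) = tofrac (z *: p + b%:P).
Proof.
rewrite /mob_comp /cst polyC0 polyC1 tofrac0 tofrac1 mul0r add0r divr1.
by rewrite tofracD -mul_polyC tofracM.
Qed.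

End Frac.
Section Mob.
Variable K : fieldType.
Implicit Types (f p q : {poly K}).

Lemma mob_frac (a b c d : K) : mob a b c d = tofrac (lin a b) / tofrac (lin c d).
Proof. by rewrite /mob /mob_comp /xF /cst /lin -!tofracM -!tofracD !mul_polyC. Qed.

Lemma cst_inj : injective (@cst K).
Proof. by move=> x y /eqP; rewrite /cst tofrac_eq => /eqP /polyC_inj. Qed.

Lemma homog f P Q : Q != 0 ->
  pcomp f (tofrac P / tofrac Q) * tofrac (Q ^+ (size f).-1) =
  tofrac (\sum_(i < size f) f`_i *: (P ^+ i * Q ^+ ((size f).-1 - i))).
Proof.
move=> Q0; rewrite /pcomp horner_coef size_map_inj_poly; last first.
- by rewrite /cst tofrac0.
- exact: cst_inj.
rewrite mulr_suml rmorph_sum; apply: eq_bigr => i _.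
rewrite coef_map_id0 ?/cst ?tofrac0 // -mul_polyC !rmorphM !rmorphXn /=.
have hi : (i <= (size f).-1)%N by rewrite -ltnS (leq_trans (ltn_ord i)) // leqSpred.
rewrite -(subnKC hi) exprD subnKC // -/(tofrac Q).
have tQ : tofrac Q != 0 by rewrite tofrac_eq0.
rewrite expr_div_n -!mulrA; congr (_ * _).
have u0 : tofrac Q ^+ i != 0 by rewrite expf_neq0.
set u := tofrac Q ^+ i in u0 *; set w := tofrac Q ^+ _.
by rewrite (mulrA u^-1) (mulVf u0) mul1r.
Qed.
End Mob.
Section Aff.
Variable K : fieldType.

Lemma affine (f : {poly K}) (a b c d : K) : (1 < size f)%N -> a * d - b * c != 0 ->
  pcomp f (mob a b c d) = tofrac f -> d != 0 /\ mob a b c d = tofrac (lin (a / d) (b / d)).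
Proof.
move=> sf2 det E.
have c0 : c = 0.
  apply/eqP/negP => /negP c0.
  have Q0 : lin c d != 0 by rewrite -size_poly_eq0 size_lin.
  move: E; rewrite mob_frac => E.
  have := homog f (lin a b) Q0; rewrite E -tofracM => /eqP; rewrite tofrac_eq => /eqP H.
  have [n sf] : exists n, size f = n.+1 by exists (size f).-1; rewrite prednK // ltnW.
  have n0 : n != 0%N by move: sf2; rewrite sf; case: n {sf}.
  move: H; rewrite sf /= => H.
  pose x0 := - d / c.
  have Q0x : (lin c d).[x0] = 0 by rewrite /lin hornerD hornerZ hornerX hornerC /x0; field.
  have := congr1 (fun p => p.[x0]) H; rewrite /= hornerM horner_exp Q0x expr0n (negPf n0) mulr0.
  rewrite horner_sum big_ord_recr /= big1; last first.
    move=> i _; rewrite hornerZ hornerM !horner_exp Q0x expr0n.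
    by rewrite subn_eq0 leqNgt ltn_ord /= !mulr0.
  rewrite add0r hornerZ hornerM !horner_exp Q0x subnn expr0 mulr1 => /esym /eqP.
  have lf : f`_n != 0.
    have : lead_coef f != 0 by rewrite lead_coef_eq0 -size_poly_eq0 sf.
    by rewrite lead_coefE sf.
  rewrite mulf_eq0 (negPf lf) /= expf_eq0 => /andP [_].
  rewrite /lin hornerD hornerZ hornerX hornerC /x0 => /eqP P0.
  move/eqP: det; apply.
  have -> : a * d - b * c = - c * (a * (- d / c) + b) by field.
  by rewrite P0 mulr0.
subst c.
have d0 : d != 0 by apply/eqP => d0; move/eqP: det; apply; rewrite d0 !mulr0 subr0.
split=> //.
rewrite mob_frac.
have -> : lin 0 d = d%:P by rewrite /lin scale0r add0r.
have -> : lin a b = lin (a / d) (b / d) * d%:P.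
  rewrite /lin mulrDl -polyCM mulrC mul_polyC scalerA.
  by rewrite mulrC divfK // divfK.
by rewrite tofracM mulfK // tofrac_eq0 polyC_eq0.
Qed.
End Aff.
Section Cyc.
Variable K : fieldType.

Lemma prod_scale (x : K) (S : seq K) :
  \prod_(y <- S) (x * y) = x ^+ size S * \prod_(y <- S) y.
Proof.
elim: S => [|y S IH]; first by rewrite !big_nil expr0 mulr1.
by rewrite !big_cons IH /= exprS; ring.
Qed.

Lemma fin_set (P : K -> Prop) m : (0 < m)%N -> (forall x, P x -> x ^+ m = 1) ->
  exists s, uniq s /\ forall x, x \in s <-> P x.
Proof.
move=> m0 Pm; apply: NNPP => H.
have gen k : exists s, [/\ uniq s, size s = k & forall x, x \in s -> P x].
  elim: k => [|k [s [us ss Ps]]]; first by exists [::].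
  have [x hx] : exists x, ~ (x \in s <-> P x).
    by apply: not_all_ex_not => H2; apply: H; exists s.
  have Px : P x /\ x \notin s.
    case: (classic (P x)) => px; case: (boolP (x \in s)) => xs.
    - by exfalso; apply: hx; split.
    - by [].
    - by exfalso; apply: px; apply: Ps.
    - exfalso; apply: hx; split => [h|/px //].
      by rewrite h in xs.
  case: Px => px xs.
  exists (x :: s); split => /=; first by rewrite xs.
    by rewrite ss.
  by move=> y; rewrite in_cons => /orP [/eqP -> | /Ps].
have [s [us ss Ps]] := gen m.+1.
have hall : all m.-unity_root s.
  by apply/allP => x /Ps /Pm hx; rewrite unity_rootE hx.
by have := max_unity_roots m0 hall us; rewrite ss ltnn.
Qed.

Lemma cyc (S : seq K) : uniq S -> 1 \in S ->
  (forall x y, x \in S -> y \in S -> x * y \in S) -> 0 \notin S ->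
  exists z, z \in S /\ forall x, x \in S -> exists k, x = z ^+ k.
Proof.
move=> uS S1 SM S0.
have pw x : x \in S -> x ^+ size S = 1.
  move=> xS; have x0 : x != 0 by apply: contraNneq S0 => <-.
  pose T := map (fun y => x * y) S.
  have uT : uniq T by rewrite map_inj_uniq //; exact: mulfI.
  have sT : {subset T <= S} by move=> y /mapP [w wS ->]; exact: SM.
  have hs : (size S <= size T)%N by rewrite size_map.
  have [szT eT] := uniq_min_size uT sT hs.
  have pT : perm_eq T S by apply: uniq_perm.
  have : \prod_(y <- T) y = \prod_(y <- S) y by apply: perm_big.
  rewrite big_map prod_scale => /eqP.
  rewrite -subr_eq0 -{2}[\prod_(y <- S) y]mul1r -mulrBl mulf_eq0 subr_eq0.
  case/orP => [/eqP -> //|]; rewrite prodf_seq_eq0 => /hasP [y yS /= /eqP y0].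
  by move: S0; rewrite -y0 yS.
have m0 : (0 < size S)%N by case: S S1 {uS SM S0 pw}.
have hall : all (size S).-unity_root S by apply/allP => x xS; rewrite unity_rootE pw.
have /hasP [z zS pz] := has_prim_root m0 hall uS (leqnn _).
exists z; split => // x xS.
have [i ->] := prim_rootP pz (pw x xS).
by exists i.
Qed.
End Cyc.
Section Main.
Variable K : fieldType.

Lemma lin_comp (a c b d : K) : lin a c \Po lin b d = lin (a * b) (a * d + c).
Proof.
rewrite /lin comp_polyD comp_polyZ comp_polyX comp_polyC scalerDr scalerA.
by rewrite -[a *: d%:P]mul_polyC -polyCM polyCD addrA.
Qed.

Lemma linZ (z a c b : K) : z *: lin a c + b%:P = lin (z * a) (z * c + b).
Proof. by rewrite /lin scalerDr scalerA -[z *: c%:P]mul_polyC -polyCM polyCD addrA. Qed.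

Lemma iter_lin (z s : K) k :
  iter k (mob_comp z ((1 - z) * s) 0 1) (xF K) = tofrac (lin (z ^+ k) ((1 - z ^+ k) * s)).
Proof.
elim: k => [|k IH] /=.
  by rewrite /xF /lin expr0 subrr mul0r scale1r addr0.
rewrite IH mob_comp_lin linZ exprS; congr (tofrac (lin _ _)); ring.
Qed.

Lemma lin10 : lin 1 0 = 'X :> {poly K}.
Proof. by rewrite /lin scale1r addr0. Qed.
End Main.

Unset Implicit Arguments.
Theorem mainTheorem1 (K : fieldType) (f : {poly K}) :
  tame f ->
  exists a b c d : K,
    a * d - b * c != 0 /\ in_fixing_group f (mob a b c d) /\
    forall u : ratf K, in_fixing_group f u ->
      exists k : nat,
        u = iter k (mob_comp a b c d) (xF K) \/
        iter k (mob_comp a b c d) u = xF K.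
Proof.
move=> [hpos htame].
have [n sf] : exists n, size f = n.+2.
  exists (size f).-2; move: hpos; case: (size f) => [|[|m]] //.
have hN : n.+1%:R != 0 :> K.
  apply/negP => h; have [p pc] := natf0_pchar (ltn0Sn n) h.
  by move: (htame p pc); rewrite sf /= (dvdn_pcharf pc) h.
pose s := sh f n.
pose P := fun x : K => f \Po lin x ((1 - x) * s) = f.
have Pm x : P x -> x ^+ n.+1 = 1 by move/(fixlin sf hN) => [].
have [S [uS HS]] := fin_set (ltn0Sn n) Pm.
have S1 : 1 \in S by apply/HS; rewrite /P subrr mul0r lin10 comp_polyXr.
have SM x y : x \in S -> y \in S -> x * y \in S.
  move=> /HS Px /HS Py; apply/HS.
  rewrite /P; have -> : lin (x * y) ((1 - x * y) * s) = lin x ((1 - x) * s) \Po lin y ((1 - y) * s).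
    by rewrite lin_comp; congr lin; ring.
  by rewrite comp_polyA Px Py.
have S0 : 0 \notin S.
  by apply/negP => /HS /Pm; rewrite expr0n /= => /eqP; rewrite eq_sym oner_eq0.
have [z [zS gen]] := cyc uS S1 SM S0.
have z0 : z != 0 by apply: contraNneq S0 => <-.
have mz : mob z ((1 - z) * s) 0 1 = tofrac (lin z ((1 - z) * s)).
  by rewrite /mob /xF mob_comp_lin.
exists z, ((1 - z) * s), 0, 1.
have det : z * 1 - (1 - z) * s * 0 != 0 by rewrite mulr0 subr0 mulr1.
split => //; split.
  exists z, ((1 - z) * s), 0, 1; split => //; split => //.
  by rewrite mz pcomp_tofrac; move/HS: zS => ->.
move=> u [a [b [c [d [dt [-> E]]]]]].
have sf2 : (1 < size f)%N by rewrite sf.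
have [d0 eu] := affine sf2 dt E.
move: E; rewrite eu pcomp_tofrac => /eqP; rewrite tofrac_eq => /eqP H.
have [_ hb] := fixlin sf hN H.
have : a / d \in S by apply/HS; rewrite /P -/s -hb.
move=> /gen [k hk].
exists k; left; rewrite iter_lin hb hk.
by [].
Qed.
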